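(* Let $X$, $Y_k$ ($k\in\mathbb N$) and norms $\|\cdot\|_{X\oplus Y_k}$ be as in the generalized $\ell^2$-sum setting. If $x^*\in X^*$ and $y_k^*\in Y_k^*$ ($k\in\mathbb N$) satisfy $\sup_k\|x^*+y_k^*\|_{X\oplus Y_k}<\infty$, and $0\le\alpha_k\le1$ ($k\in\mathbb N$) satisfy $\sum_k\alpha_k^2\le1$, then $$\Big\|x^*+\sum_k\alpha_ky_k^*\Big\|_\Sigma\le\sup_k\|x^*+y_k^*\|_{X\oplus Y_k}.$$
   Context: Setting: $(X,\|\cdot\|_X)$ and $(Y_k,\|\cdot\|_{Y_k})$, $k\in\mathbb N$, are Banach spaces; for each $k$, $\|\cdot\|_{X\oplus Y_k}$ is a norm on $X\oplus Y_k$ coinciding with $\|\cdot\|_X$ on $X$ and with $\|\cdot\|_{Y_k}$ on $Y_k$, and monotone: $\|x+y_k\|_{X\oplus Y_k}\ge\|x\|_X$. Duals of direct sums are identified with direct sums of duals via $(x^*+y^* )(x+y)=x^*(x)+y^*(y)$. $\Lambda(X\oplus Y_k)$ is the set of functionals $x^*+\sum_k\alpha_ky_k^*$ (acting by $x+\sum y_k\mapsto x^*(x)+\sum\alpha_ky_k^*(y_k)$) with $x^*\in X^*$, $y_k^*\in Y_k^*$, $\|x^*+y_k^*\|_{X\oplus Y_k}\le1$ for all $k$, $0\le\alpha_k\le1$, $\sum\alpha_k^2\le1$. $\Sigma(X\oplus Y_k)=\{x+y_1+y_2+\dots:x\in X,y_k\in Y_k,\sum\|y_k\|_{Y_k}^2<\infty\}$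 with $\|z\|_\Sigma=\sup\{|z^*(z)|:z^*\in\Lambda(X\oplus Y_k)\}$; the dual norm is also denoted $\|\cdot\|_\Sigma$. *)

(* Defs.v *)
From HB Require Import structures.
From mathcomp Require Import all_boot all_order all_algebra.
From mathcomp Require Import all_classical all_reals all_analysis.
Set Implicit Arguments. Unset Strict Implicit. Unset Printing Implicit Defensive.
Import Order.TTheory GRing.Theory Num.Theory numFieldNormedType.Exports.
Local Open Scope classical_set_scope.
Local Open Scope ring_scope.

(* Conventions:
   - an element x + y of X (+) Y_k is represented as the pair (x, y);
   - a norm on X (+) Y_k is a function N : X -> Y k -> R (see is_sum_norm);
   - a continuous linear functional on V is a record [dual V];
   - x^* + y^* acts on (x, y) as x^*(x) + y^*(y). *)

Record dual (R : realType) (V : normedModType R) := Dual {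
  dfun :> V -> R ;
  dfun_lin : forall (a : R) (u v : V), dfun (a *: u + v) = a * dfun u + dfun v ;
  dfun_cont : continuous dfun }.

Definition is_sum_norm (R : realType) (X Y : normedModType R)
    (N : X -> Y -> R) : Prop :=
  [/\ forall x1 x2 y1 y2, N (x1 + x2) (y1 + y2) <= N x1 y1 + N x2 y2,
      forall (a : R) x y, N (a *: x) (a *: y) = `|a| * N x y,
      forall x y, N x y = 0 -> x = 0 /\ y = 0,
      forall x, N x 0 = `|x| &
      (forall y, N 0 y = `|y|) /\
      (forall x y, `|x| <= N x y)].

Definition sum_dual_norm (R : realType) (X Y : normedModType R)
    (N : X -> Y -> R) (xs : dual X) (ys : dual Y) : \bar R :=
  ereal_sup [set r : \bar R | exists (x : X) (y : Y),
                  N x y <= 1 /\ r = (`| xs x + ys y |)%:E].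

Definition lam_apply (R : realType) (X : normedModType R)
    (Y : nat -> normedModType R) (xs : dual X) (ys : forall k, dual (Y k))
    (alpha : nat -> R) (x : X) (y : forall k, Y k) : R :=
  xs x + limn (fun n => \sum_(0 <= k < n) alpha k * ys k (y k)).

Definition in_Sigma (R : realType) (Y : nat -> normedModType R)
    (y : forall k, Y k) : Prop :=
  (\sum_(0 <= k <oo) ((`| y k | ^+ 2)%:E) < +oo)%E.

Definition in_Lambda (R : realType) (X : normedModType R)
    (Y : nat -> normedModType R) (N : forall k, X -> Y k -> R)
    (xs : dual X) (ys : forall k, dual (Y k)) (alpha : nat -> R) : Prop :=
  [/\ forall k, (sum_dual_norm (N k) xs (ys k) <= 1)%E,
      forall k, 0 <= alpha k <= 1 &
      (\sum_(0 <= k <oo) ((alpha k ^+ 2)%:E) <= 1)%E].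

Definition Sigma_norm (R : realType) (X : normedModType R)
    (Y : nat -> normedModType R) (N : forall k, X -> Y k -> R)
    (x : X) (y : forall k, Y k) : \bar R :=
  ereal_sup [set r : \bar R | exists (xs : dual X) (ys : forall k, dual (Y k))
                 (alpha : nat -> R), in_Lambda N xs ys alpha /\
                 r = (`| lam_apply xs ys alpha x y |)%:E].

Definition Sigma_dual_norm (R : realType) (X : normedModType R)
    (Y : nat -> normedModType R) (N : forall k, X -> Y k -> R)
    (xs : dual X) (ys : forall k, dual (Y k)) (alpha : nat -> R) : \bar R :=
  ereal_sup [set r : \bar R | exists (x : X) (y : forall k, Y k),
                 [/\ in_Sigma y, (Sigma_norm N x y <= 1)%E &
                     r = (`| lam_apply xs ys alpha x y |)%:E]].

(* Main.v *)
Require Import Defs.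
From HB Require Import structures.
From mathcomp Require Import all_boot all_order all_algebra.
From mathcomp Require Import all_classical all_reals all_analysis.
Import Order.TTheory GRing.Theory Num.Theory numFieldNormedType.Exports.
Local Open Scope classical_set_scope.
Local Open Scope ring_scope.

Lemma dfun0 (R : realType) (V : normedModType R) (f : dual V) : f 0 = 0.
Proof.
have H := dfun_lin f 1 0 0; rewrite scaler0 addr0 mul1r in H.
by apply: (addrI (f 0)); rewrite addr0 -H.
Qed.

Lemma dfunZ (R : realType) (V : normedModType R) (f : dual V) a u :
  f (a *: u) = a * f u.
Proof. by have := dfun_lin f a u 0; rewrite addr0 dfun0 addr0. Qed.

Lemma dscale_lin (R : realType) (V : normedModType R) (c : R) (f : dual V) a u v :
  c * f (a *: u + v) = a * (c * f u) + c * f v.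
Proof. by rewrite dfun_lin mulrDr mulrCA. Qed.

Lemma dscale_cont (R : realType) (V : normedModType R) (c : R) (f : dual V) :
  continuous (fun v => c * f v).
Proof.
move=> x; apply: (@continuousM _ _ (cst c) f); first exact: cst_continuous.
exact: dfun_cont.
Qed.

Definition dscale (R : realType) (V : normedModType R) (c : R) (f : dual V) : dual V :=
  @Dual R V (fun v : V => c * f v) (@dscale_lin R V c f) (@dscale_cont R V c f).

Arguments dscale {R V}.

Lemma limn_scale (R : realType) (c : R) (u : nat -> R) : c != 0 ->
  limn (fun n => c * u n) = c * limn u.
Proof.
move=> cnz; case: (pselect (cvg (u @ \oo))) => h.
  have := limZl_tmp c h; move=> /= H; exact: H.
have h' : ~ cvg ((fun n => c * u n) @ \oo).
  by move=> hc; apply: h; rewrite -(is_cvgZlE _ cnz); exact hc.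
rewrite (dvgP h) (dvgP h').
have -> : (point : R) = 0 by []. by rewrite mulr0.
Qed.

Lemma dual_bound (R : realType) (X Y : normedModType R) (N : X -> Y -> R)
  (hN : is_sum_norm N) (xs : dual X) (ys : dual Y) (M : R) :
  (sum_dual_norm N xs ys <= M%:E)%E -> forall x y, `|xs x + ys y| <= M * N x y.
Proof.
case: hN => _ hZ h0 _ [_ hmon] hM x y.
have N0 : 0 <= N x y by apply: le_trans (hmon x y).
case: (eqVneq (N x y) 0) => [NE|nz].
  by rewrite NE; case: (h0 _ _ NE) => -> ->; rewrite !dfun0 addr0 normr0 mulr0.
set t := (N x y)^-1.
have tp : 0 < t by rewrite invr_gt0 lt_def nz N0.
have H1 : `|xs (t *: x) + ys (t *: y)| <= M.
  rewrite -lee_fin; apply: le_trans hM; apply: ereal_sup_ubound.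
  exists (t *: x), (t *: y); split => //.
  by rewrite hZ gtr0_norm // mulVf.
rewrite !dfunZ -mulrDr normrM gtr0_norm // in H1.
have -> : `|xs x + ys y| = N x y * (t * `|xs x + ys y|).
  by rewrite mulrA mulfV // mul1r.
by rewrite mulrC ler_wpM2r.
Qed.

Theorem lemma3p3 (R : realType) (X : completeNormedModType R)
    (Y : nat -> completeNormedModType R) (N : forall k, X -> Y k -> R)
    (hN : forall k, is_sum_norm (N k))
    (xs : dual X) (ys : forall k, dual (Y k)) (alpha : nat -> R)
    (hsup : (ereal_sup (range (fun k => sum_dual_norm (N k) xs (ys k))) < +oo)%E)
    (halpha : forall k, 0 <= alpha k <= 1)
    (halpha2 : (\sum_(0 <= k <oo) ((alpha k ^+ 2)%:E) <= 1)%E) :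
  (Sigma_dual_norm N xs ys alpha <=
     ereal_sup (range (fun k => sum_dual_norm (N k) xs (ys k))))%E.
Proof.
set S := ereal_sup _ in hsup *.
have sd0 : forall k, (0 <= sum_dual_norm (N k) xs (ys k))%E.
  move=> k; apply: ereal_sup_ubound; exists 0, 0; split.
    by case: (hN k) => _ _ _ hx _; rewrite hx normr0.
  by rewrite !dfun0 addr0 normr0.
have S0 : (0 <= S)%E by apply: le_trans (sd0 0%N) _; apply: ereal_sup_ubound; exists 0%N.
have Sfin : S \is a fin_num by rewrite ge0_fin_numE.
set M := fine S.
have SE : S = M%:E by rewrite fineK.
have M0 : 0 <= M by rewrite -lee_fin -SE.
have hk : forall k, (sum_dual_norm (N k) xs (ys k) <= M%:E)%E.
  by move=> k; rewrite -SE; apply: ereal_sup_ubound; exists k.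
have bnd := fun k => @dual_bound R X (Y k) (N k) (hN k) xs (ys k) M (hk k).
apply: ge_ereal_sup => _ [x [y [insig hsig ->]]].
rewrite SE lee_fin; apply/ler_addgt0Pr => e e0.
set c := M + e.
have cp : 0 < c by rewrite /c ltr_wpDl.
pose xs' := dscale c^-1 xs.
pose ys' := fun k => dscale c^-1 (ys k).
have inL : in_Lambda N xs' ys' alpha.
  split => // k; apply: ge_ereal_sup => _ [x' [y' [Hn ->]]].
  rewrite lee_fin /= -mulrDr normrM ger0_norm; last by rewrite invr_ge0 ltW.
  rewrite ler_pdivrMl // mulr1; apply: le_trans (bnd k x' y') _.
  apply: le_trans (ler_wpM2l M0 Hn) _; rewrite mulr1 /c lerDl; exact: ltW.
have H : (`|lam_apply xs' ys' alpha x y|%:E <= Sigma_norm N x y)%E.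
  by apply: ereal_sup_ubound; exists xs', ys', alpha.
have H2 := le_trans H hsig; rewrite lee_fin in H2.
have E : lam_apply xs' ys' alpha x y = c^-1 * lam_apply xs ys alpha x y.
  rewrite /lam_apply /= mulrDr -limn_scale; last by rewrite invr_eq0 gt_eqF.
  congr (_ + limn _); apply: funext => n; rewrite big_distrr /=.
  by apply: eq_bigr => k _; rewrite mulrCA.
rewrite E normrM ger0_norm in H2; last by rewrite invr_ge0 ltW.
by rewrite ler_pdivrMl // mulr1 in H2.
Qed.
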